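(* Let $\mathcal P=\mathcal P(V,R)$ and $\mathcal Q=\mathcal P(W,S)$ be binary quadratic operads over a field $\Bbbk$ with $\dim V,\dim W<\infty$. Let $(e_i)_{i\in I}$ be a basis of $V$, $(f_j)_{j\in J}$ a basis of $W$, and $(e_i^\vee)_{i\in I}$ the dual basis of $V^\vee$. Write the operations of $\mathcal P^!$ as $e_i^\vee=x_1\circ^i x_2$, those of $\mathcal Q$ as $f_j=x_1*_j x_2$, and the generating operations $1_-\otimes e_i\otimes f_j\in\Bbbk_-\otimes V\otimes W$ of $\mathcal P\bullet\mathcal Q$ as $x_1*_{i,j}x_2$. Let $A$ be a vector space with bilinear operations $(\cdot*_{i,j}\cdot)$, $i\in I$, $j\in J$. For a $\mathcal P^!$-algebra $B$ equip $B\otimes A$ with the operations $$(p\otimes a)*_j(q\otimes b)=\sum_{i\in I}(p\circ^i q)\otimes(a*_{i,j}b),\quad p,q\in B,\ a,b\in A,\ j\in J.$$ Then $A$ is a $(\mathcal P\bullet\mathcal Q)$-algebra if and only if for every $\mathcal P^!$-algebra $B$ the space $B\otimes A$ with these operations is a $\mathcal Q$-algebra.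
   Context: A binary quadratic operad $\mathcal P(V,R)$ is generated by an $S_2$-module $V$ of binary operations subject to relations $R\subseteq\mathcal F_V(3)$, $\mathcal F_V$ the free operad. $\Bbbk_-$ is the sign representation of $S_2$, $V^\vee=V^*\otimes\Bbbk_-$, and $\mathcal P^!=\mathcal P(V^\vee,R^\perp)$ is the Koszul dual operad. $\mathcal P\bullet\mathcal Q$ is the Manin black product (Ginzburg–Kapranov): the binary quadratic operad generated by $\Bbbk_-\otimes V\otimes W$ whose relations are the image of $\Bbbk_-\otimes R\otimes S$ under the natural projection $\Bbbk_-\otimes\mathcal F_V(3)\otimes\mathcal F_W(3)\to\mathcal F_{\Bbbk_-\otimes V\otimes W}(3)$ (dual to the embedding of $\mathrm{Ind}_{S_2}^{S_3}((V^\vee\otimes W^\vee)\otimes(V^\vee\otimes W^\vee))$ into $\mathcal F_V(3)^\vee\otimes\mathcal F_W(3)^\vee$). *)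

(* Defs.v *)
From HB Require Import structures.
From mathcomp Require Import all_boot all_algebra all_fingroup.
Set Implicit Arguments.
Unset Strict Implicit.
Unset Printing Implicit Defensive.
Import GRing.Theory.
Local Open Scope ring_scope.

Definition c3 (k : 'I_3) (d : nat) : 'I_3 := inord ((k + d) %% 3)%N.

(* An S_2-module structure on K^I (basis e_i) is an involution tau, acting
   on columns: sigma . e_i = \sum_k tau k i e_k. *)
Definition involutive_mx (K : fieldType) (I : finType) (tau : I -> I -> K) :=
  forall i j, \sum_(k : I) tau i k * tau k j = (i == j)%:R.

(* F_V(3) = Ind_{S_2}^{S_3}(V (x) V): coordinates c k i j of the element
   \sum c k i j . e_i(e_j(x_{k+1}, x_{k+2}), x_k)   (indices mod 3). *)
Definition F3 (K : Type) (I : Type) := 'I_3 -> I -> I -> K.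

(* The action of s in S_3 on F_V(3) (relabelling x_a |-> x_{s a}). *)
Definition act3 (K : fieldType) (I : finType) (tau : I -> I -> K)
  (s : 'S_3) (c : F3 K I) : F3 K I :=
  fun k' i l => let k := (s^-1)%g k' in
    if s (c3 k 1) == c3 k' 1 then c k i l
    else \sum_(j : I) tau l j * c k i j.

Definition is_relation_space (K : fieldType) (I : finType) (tau : I -> I -> K)
  (R : F3 K I -> Prop) : Prop :=
  [/\ R (fun _ _ _ => 0),
      (forall a c d, R c -> R d -> R (fun k i j => a * c k i j + d k i j)) &
      (forall s c, R c -> R (act3 tau s c))].

Definition bilinear_op (K : fieldType) (X : lmodType K) (I : Type)
  (op : I -> X -> X -> X) : Prop :=
  forall i,
    (forall y a u v, op i (a *: u + v) y = a *: op i u y + op i v y) /\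
    (forall x a u v, op i x (a *: u + v) = a *: op i x u + op i x v).

(* (sigma . e_i)(x, y) = e_i(y, x) *)
Definition equivariant (K : fieldType) (I : finType) (tau : I -> I -> K)
  (X : lmodType K) (op : I -> X -> X -> X) : Prop :=
  forall i x y, op i y x = \sum_(k : I) tau k i *: op k x y.

Definition eval3 (K : fieldType) (I : finType) (X : lmodType K)
  (op : I -> X -> X -> X) (c : F3 K I) (x : 'I_3 -> X) : X :=
  \sum_(k < 3) \sum_(i : I) \sum_(j : I)
     c k i j *: op i (op j (x (c3 k 1)) (x (c3 k 2))) (x k).

Definition is_algebra (K : fieldType) (I : finType) (tau : I -> I -> K)
  (R : F3 K I -> Prop) (X : lmodType K) (op : I -> X -> X -> X) : Prop :=
  [/\ bilinear_op op, equivariant tau op &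
      forall c, R c -> forall x, eval3 op c x = 0].

(* Koszul dual: V^vee = V^* (x) k_-, in the dual basis e_i^vee;
   sigma . e_i^vee = - \sum_k tau i k e_k^vee. *)
Definition dual_tau (K : fieldType) (I : Type) (tau : I -> I -> K) :
  I -> I -> K := fun k i => - tau i k.

Definition perp (K : fieldType) (I : finType) (R : F3 K I -> Prop) :
  F3 K I -> Prop :=
  fun d => forall c, R c ->
    \sum_(k < 3) \sum_(i : I) \sum_(j : I) c k i j * d k i j = 0.

(* Black product: generators k_- (x) V (x) W with basis 1_- (x) e_i (x) f_j. *)
Definition black_tau (K : fieldType) (I J : Type) (tauV : I -> I -> K)
  (tauW : J -> J -> K) : I * J -> I * J -> K :=
  fun p q => - (tauV p.1 q.1 * tauW p.2 q.2).

(* Relations: image of k_- (x) R (x) S under the natural projection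
   (mu o_k nu) (x) (mu' o_k nu') |-> (mu (x) mu') o_k (nu (x) nu'). *)
Definition black_rel (K : fieldType) (I J : finType)
  (R : F3 K I -> Prop) (S : F3 K J -> Prop) : F3 K (I * J) -> Prop :=
  fun d => exists r s, [/\ R r, S s &
     forall k p q, d k p q = r k p.1 q.1 * s k p.2 q.2].

(* An element of B (x) A is represented by a finite list of pure tensors
   [(b_1,a_1); ...] standing for \sum b_t (x) a_t.  Such a sum is zero in
   B (x) A iff \sum psi(b_t) a_t = 0 for every linear form psi on B. *)
Definition tens (K : fieldType) (B A : lmodType K) := seq (B * A).

Definition lin_form (K : fieldType) (B : lmodType K) (psi : B -> K) : Prop :=
  forall a u v, psi (a *: u + v) = a * psi u + psi v.

Definition tnull (K : fieldType) (B A : lmodType K) (t : tens B A) : Prop :=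
  forall psi : B -> K, lin_form psi -> \sum_(x <- t) psi x.1 *: x.2 = 0.

Definition tscale (K : fieldType) (B A : lmodType K) (a : K) (t : tens B A) :
  tens B A := [seq (a *: x.1, x.2) | x <- t].

Definition teq (K : fieldType) (B A : lmodType K) (t1 t2 : tens B A) : Prop :=
  tnull (t1 ++ tscale (-1) t2).

Definition tmul (K : fieldType) (I J : finType) (B A : lmodType K)
  (opB : I -> B -> B -> B) (opA : I * J -> A -> A -> A) (j : J)
  (t1 t2 : tens B A) : tens B A :=
  flatten [seq [seq (opB i x.1 y.1, opA (i, j) x.2 y.2) | i <- enum I]
          | x <- t1, y <- t2].

Definition teval (K : fieldType) (J : finType) (B A : lmodType K)
  (op : J -> tens B A -> tens B A -> tens B A) (s : F3 K J)
  (t : 'I_3 -> tens B A) : tens B A :=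
  \big[cat/[::]]_(k < 3) \big[cat/[::]]_(j : J) \big[cat/[::]]_(j' : J)
     tscale (s k j j') (op j (op j' (t (c3 k 1)) (t (c3 k 2))) (t k)).

Definition is_tensor_Q_algebra (K : fieldType) (I J : finType)
  (tauW : J -> J -> K) (S : F3 K J -> Prop) (B A : lmodType K)
  (opB : I -> B -> B -> B) (opA : I * J -> A -> A -> A) : Prop :=
  (forall j t1 t2, teq (tmul opB opA j t2 t1)
      (\big[cat/[::]]_(l : J) tscale (tauW l j) (tmul opB opA l t1 t2))) /\
  (forall s, S s -> forall t, tnull (teval (tmul opB opA) s t)).

(* Main.v *)
Require Import Defs.
From mathcomp Require Import all_boot all_algebra all_fingroup.
From mathcomp Require Import ring.
From Stdlib Require Import Classical FunctionalExtensionality.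
Set Implicit Arguments. Unset Strict Implicit. Unset Printing Implicit Defensive.
Import GRing.Theory.
Local Open Scope ring_scope.

Section DoublePerp.
Variables (K : fieldType) (I : finType).
Local Notation T := ('I_3 * (I * I))%type.
Local Notation N := #|{: T}|.

Definition vecF (c : F3 K I) : 'rV[K]_N :=
  \row_(x < N) (let t := enum_val x in c t.1 t.2.1 t.2.2).
Definition decF (v : 'rV[K]_N) : F3 K I :=
  fun k i j => v 0 (enum_rank (k, (i, j))).

Lemma decF_vecF c : decF (vecF c) = c.
Proof.
apply: functional_extensionality => k; apply: functional_extensionality => i;
apply: functional_extensionality => j.
by rewrite /decF /vecF mxE enum_rankK.
Qed.

Lemma sum3T (F : 'I_3 -> I -> I -> K) :
  \sum_(k < 3) \sum_(i : I) \sum_(j : I) F k i j =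
  \sum_(x < N) (let t := enum_val x in F t.1 t.2.1 t.2.2).
Proof.
under eq_bigr do rewrite pair_bigA /=.
rewrite pair_bigA /=.
rewrite (reindex (@enum_rank T)) /=; last first.
  by apply: onW_bij; apply: enum_rank_bij.
by apply: eq_bigr => t _; rewrite enum_rankK.
Qed.

Lemma pair_mx (c : F3 K I) (C : 'M[K]_N) (j : 'I_N) :
  \sum_(k < 3) \sum_(i : I) \sum_(l : I) c k i l * decF (col j C)^T k i l =
  (vecF c *m C) 0 j.
Proof.
rewrite sum3T mxE; apply: eq_bigr => x _.
by rewrite /decF /vecF !mxE -surjective_pairing -surjective_pairing enum_valK.
Qed.

Lemma perpperp (R : F3 K I -> Prop) :
  R (fun _ _ _ => 0) ->
  (forall a c d, R c -> R d -> R (fun k i j => a * c k i j + d k i j)) ->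
  forall r, perp (perp R) r -> R r.
Proof.
move=> R0 Rlin r Hr.
pose P n := exists M : 'M[K]_N,
  (forall v : 'rV_N, (v <= M)%MS -> R (decF v)) /\ (n <= \rank M)%N.
have P0 : P 0%N.
  exists 0; split => // v; rewrite submx0 => /eqP ->.
  suff -> : decF 0 = (fun _ _ _ => 0) by [].
  apply: functional_extensionality => k; apply: functional_extensionality => i;
  apply: functional_extensionality => j; by rewrite /decF mxE.
have PN : ~ P N.+1.
  by case=> M [_]; rewrite ltnNge rank_leq_col.
have [n [Pn Pn1]] : exists n, P n /\ ~ P n.+1.
  apply: NNPP => H.
  suff : forall m, P m by move/(_ N.+1).
  elim => // m IH; apply: NNPP => Hm; apply: H; by exists m.
case: Pn => M [HM Hn].
have allin : forall c, R c -> (vecF c <= M)%MS.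
  move=> c Rc; apply: NNPP => /negP Hc; apply: Pn1.
  exists (M + vecF c)%MS; split.
    move=> v /sub_addsmxP [[u1 u2] /= ->].
    have : (u2 *m vecF c <= vecF c)%MS by apply: submxMl.
    case/sub_rVP => a ->.
    have := HM (u1 *m M) (submxMl _ _) => H1.
    suff -> : decF (u1 *m M + a *: vecF c) =
      (fun k i j => a * c k i j + decF (u1 *m M) k i j) by apply: Rlin.
    apply: functional_extensionality => k; apply: functional_extensionality => i;
    apply: functional_extensionality => j.
    by rewrite /decF !mxE addrC enum_rankK.
  apply: leq_ltn_trans Hn _; apply: rank_ltmx.
  by rewrite ltmxE addsmxSl /= addsmx_sub submx_refl.
apply: NNPP => nR.
have nin : ~~ (vecF r <= M)%MS.
  by apply/negP => /HM; rewrite decF_vecF.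
move: nin; rewrite submxE => /eqP nz.
have [j nzj] : exists j, (vecF r *m cokermx M) 0 j != 0.
  apply: NNPP => H; apply: nz; apply/matrixP => a b.
  rewrite ord1 [RHS]mxE; apply: NNPP => H2; apply: H; by exists b; apply/eqP.
have wperp : perp R (decF (col j (cokermx M))^T).
  move=> c Rc; rewrite pair_mx.
  case/submxP: (allin c Rc) => x ->.
  by rewrite -mulmxA mulmx_coker mulmx0 mxE.
move: (Hr _ wperp).
have -> : \sum_(k < 3) \sum_(i : I) \sum_(l : I)
    decF (col j (cokermx M))^T k i l * r k i l =
  \sum_(k < 3) \sum_(i : I) \sum_(l : I)
    r k i l * decF (col j (cokermx M))^T k i l.
  by apply: eq_bigr => k _; apply: eq_bigr => i _; apply: eq_bigr => l _; rewrite mulrC.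
by rewrite pair_mx => E; move: nzj; rewrite E eqxx.
Qed.
End DoublePerp.


Section Tens.
Variables (K : fieldType) (I J : finType).

Section Lin.
Variables (B : lmodType K) (psi : B -> K) (hpsi : lin_form psi).
Lemma psi0 : psi 0 = 0.
Proof. have := hpsi 1 0 0. rewrite scaler0 addr0 mul1r => /eqP. by rewrite -subr_eq subrr eq_sym => /eqP. Qed.
Lemma psiZ a u : psi (a *: u) = a * psi u.
Proof. by rewrite -[a *: u]addr0 hpsi psi0 addr0. Qed.
Lemma psiD u v : psi (u + v) = psi u + psi v.
Proof. by have := hpsi 1 u v; rewrite scale1r mul1r. Qed.
Lemma psi_sum (T : Type) (r : seq T) (F : T -> B) :
  psi (\sum_(x <- r) F x) = \sum_(x <- r) psi (F x).
Proof. by apply: (big_morph psi psiD psi0). Qed.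
Lemma psi_sumZ (T : Type) (r : seq T) (a : T -> K) (F : T -> B) :
  psi (\sum_(x <- r) a x *: F x) = \sum_(x <- r) a x * psi (F x).
Proof. rewrite psi_sum; apply: eq_bigr => x _; exact: psiZ. Qed.

Variable (A : lmodType K).
Definition Phi (t : tens B A) : A := \sum_(x <- t) psi x.1 *: x.2.
Lemma Phi_cat t1 t2 : Phi (t1 ++ t2) = Phi t1 + Phi t2.
Proof. by rewrite /Phi big_cat. Qed.
Lemma Phi_tscale a t : Phi (tscale a t) = a *: Phi t.
Proof.
rewrite /Phi /tscale big_map scaler_sumr; apply: eq_bigr => x _ /=.
by rewrite psiZ scalerA.
Qed.
Lemma Phi_nil : Phi [::] = 0. Proof. by rewrite /Phi big_nil. Qed.
Lemma Phi_bigcat (T : Type) (r : seq T) (F : T -> tens B A) :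
  Phi (\big[cat/[::]]_(x <- r) F x) = \sum_(x <- r) Phi (F x).
Proof. by apply: (big_morph Phi Phi_cat Phi_nil). Qed.
End Lin.

Lemma sum_tmul (B A : lmodType K) (V : nmodType) (opB : I -> B -> B -> B)
  (opA : I * J -> A -> A -> A) j t1 t2 (G : B * A -> V) :
  \sum_(w <- tmul opB opA j t1 t2) G w =
  \sum_(x <- t1) \sum_(y <- t2) \sum_(i : I) G (opB i x.1 y.1, opA (i, j) x.2 y.2).
Proof.
rewrite /tmul big_flatten /= big_allpairs_dep /=.
apply: eq_bigr => x _; apply: eq_bigr => y _.
by rewrite big_map big_enum.
Qed.

End Tens.


Section Fwd.
Variables (K : fieldType) (I J : finType) (tauV : I -> I -> K) (tauW : J -> J -> K).
Hypothesis hV : involutive_mx tauV.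

Lemma kron_sum (p : I -> K) q1 :
  \sum_k (q1 == k)%:R * p k = p q1.
Proof.
rewrite (bigD1 q1) //= eqxx mul1r big1 ?addr0 // => k /negbTE nk.
by rewrite eq_sym nk mul0r.
Qed.



Lemma scal_id (p : I -> K) q1 (w : K) :
  \sum_i (\sum_k dual_tau tauV k i * p k) * - (tauV q1 i * w) = w * p q1.
Proof.
transitivity (\sum_i \sum_k (tauV q1 i * tauV i k) * p k * w).
  apply: eq_bigr => i _; rewrite mulr_suml; apply: eq_bigr => k _.
  rewrite /dual_tau; ring.
rewrite exchange_big /= -(kron_sum p q1) mulr_sumr; apply: eq_bigr => k _.
rewrite -hV mulr_suml mulr_sumr; apply: eq_bigr => i _; ring.
Qed.

Variables (B A : lmodType K) (opB : I -> B -> B -> B) (opA : I * J -> A -> A -> A).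
Hypothesis eqB : equivariant (dual_tau tauV) opB.
Hypothesis eqA : equivariant (black_tau tauV tauW) opA.

Lemma point_equiv (psi : B -> K) (hpsi : lin_form psi) b b' a a' j :
  \sum_i psi (opB i b' b) *: opA (i, j) a' a =
  \sum_l tauW l j *: \sum_i psi (opB i b b') *: opA (i, l) a a'.
Proof.
under eq_bigr do rewrite eqB eqA (psi_sumZ hpsi) scaler_sumr.
under eq_bigr do under eq_bigr do rewrite scalerA.
rewrite exchange_big /=.
under eq_bigr do rewrite -scaler_suml.
under [RHS]eq_bigr do rewrite scaler_sumr.
rewrite [RHS]exchange_big /= [RHS]pair_bigA /=.
apply: eq_bigr => [[q1 q2]] _ /=.
rewrite scalerA; congr (_ *: _).
rewrite /black_tau /= scal_id; ring.
Qed.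

Lemma fwd_equiv j t1 t2 :
  teq (tmul opB opA j t2 t1)
      (\big[cat/[::]]_(l : J) tscale (tauW l j) (tmul opB opA l t1 t2)).
Proof.
move=> psi hpsi.
change (Phi psi (tmul opB opA j t2 t1 ++ tscale (-1)
   (\big[cat/[::]]_(l : J) tscale (tauW l j) (tmul opB opA l t1 t2))) = 0).
rewrite Phi_cat (Phi_tscale hpsi) scaleN1r Phi_bigcat; apply/eqP; rewrite subr_eq0; apply/eqP.
under [RHS]eq_bigr do rewrite (Phi_tscale hpsi) /Phi sum_tmul scaler_sumr.
rewrite /Phi sum_tmul exchange_big /= [RHS]exchange_big /=.
apply: eq_bigr => x _.
under [RHS]eq_bigr do rewrite scaler_sumr.
rewrite [RHS]exchange_big /=; apply: eq_bigr => y _.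
exact: point_equiv.
Qed.
End Fwd.


Lemma c3_val (k : 'I_3) d : val (c3 k d) = ((k + d) %% 3)%N.
Proof. by rewrite /c3 /= inordK // ltn_pmod. Qed.

Lemma ord3_cases (k : 'I_3) : [\/ k = inord 0, k = inord 1 | k = inord 2].
Proof.
case: k => [[|[|[|m]]] Hm] //.
- by apply: Or31; apply: val_inj; rewrite /= inordK.
- by apply: Or32; apply: val_inj; rewrite /= inordK.
- by apply: Or33; apply: val_inj; rewrite /= inordK.
Qed.

Lemma c3_inord (n d : nat) : (n < 3)%N -> c3 (inord n) d = inord ((n + d) %% 3).
Proof. by move=> Hn; apply: val_inj; rewrite c3_val /= !inordK // ltn_pmod. Qed.

Ltac norm3 := rewrite ?inordK // ?c3_inord //= ?inordK // ?c3_inord //= ?inordK // ?c3_inord //=.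

Lemma reorg (T : Type) (V : nmodType) (t : 'I_3 -> seq T) (H : 'I_3 -> T -> T -> T -> V) :
  \sum_(k < 3) \sum_(x <- t (c3 k 1)) \sum_(y <- t (c3 k 2)) \sum_(z <- t k) H k x y z =
  \sum_(x0 <- t (inord 0)) \sum_(x1 <- t (inord 1)) \sum_(x2 <- t (inord 2))
    \sum_(k < 3) H k (nth x0 [:: x0; x1; x2] (c3 k 1))
                     (nth x0 [:: x0; x1; x2] (c3 k 2)) (nth x0 [:: x0; x1; x2] k).
Proof.
under [RHS]eq_bigr do under eq_bigr do rewrite exchange_big.
under [RHS]eq_bigr do rewrite exchange_big.
rewrite [RHS]exchange_big; apply: eq_bigr => k _.
case: (ord3_cases k) => ->; rewrite !c3_inord // !inordK //=.
- under eq_bigr do rewrite exchange_big.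
  by rewrite exchange_big.
- rewrite exchange_big /=; apply: eq_bigr => x0 _.
  by rewrite exchange_big.
Qed.

Lemma pull3 (T0 T1 T2 T3 : Type) (V : nmodType) (r0 : seq T0) (r1 : seq T1)
  (r2 : seq T2) (r3 : seq T3) (F : T0 -> T1 -> T2 -> T3 -> V) :
  \sum_(j <- r0) \sum_(x <- r1) \sum_(y <- r2) \sum_(z <- r3) F j x y z =
  \sum_(x <- r1) \sum_(y <- r2) \sum_(z <- r3) \sum_(j <- r0) F j x y z.
Proof.
rewrite exchange_big; apply: eq_bigr => x _.
rewrite exchange_big; apply: eq_bigr => y _.
by rewrite exchange_big.
Qed.

Lemma reord3 (T0 T1 T2 : Type) (V : nmodType) (r0 : seq T0) (r1 : seq T1)
  (r2 : seq T2) (F : T0 -> T1 -> T2 -> V) :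
  \sum_(a <- r0) \sum_(b <- r1) \sum_(c <- r2) F a b c =
  \sum_(c <- r2) \sum_(b <- r1) \sum_(a <- r0) F a b c.
Proof.
rewrite exchange_big /=. under eq_bigr do rewrite exchange_big.
rewrite exchange_big; apply: eq_bigr => c _. by rewrite exchange_big.
Qed.

Lemma sum_pair (I J : finType) (V : nmodType) (G : I * J -> V) :
  \sum_(p : I * J) G p = \sum_(i : I) \sum_(j : J) G (i, j).
Proof. by rewrite pair_bigA; apply: eq_bigr => [[]]. Qed.

Section PhiTeval.
Variables (K : fieldType) (I J : finType).
Variables (B A : lmodType K) (opB : I -> B -> B -> B) (opA : I * J -> A -> A -> A).

Definition Hf (s : F3 K J) (psi : B -> K) (k : 'I_3) (x y z : B * A) : A :=
  \sum_(j : J) \sum_(j' : J) s k j j' *: \sum_(i' : I) \sum_(i : I)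
     psi (opB i (opB i' x.1 y.1) z.1) *: opA (i, j) (opA (i', j') x.2 y.2) z.2.

Definition rX (psi : B -> K) (X : 'I_3 -> B * A) : F3 K I :=
  fun k i i' => psi (opB i (opB i' (X (c3 k 1)).1 (X (c3 k 2)).1) (X k).1).

Lemma Phi_teval (psi : B -> K) (hpsi : lin_form psi) s t :
  Phi psi (teval (tmul opB opA) s t) =
  \sum_(x0 <- t (inord 0)) \sum_(x1 <- t (inord 1)) \sum_(x2 <- t (inord 2))
    eval3 opA (fun k p q => rX psi (fun m => nth x0 [:: x0; x1; x2] m) k p.1 q.1 * s k p.2 q.2)
      (fun m => (nth x0 [:: x0; x1; x2] m).2).
Proof.
transitivity (\sum_(k < 3) \sum_(x <- t (c3 k 1)) \sum_(y <- t (c3 k 2))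
   \sum_(z <- t k) Hf s psi k x y z).
  rewrite /teval Phi_bigcat; apply: eq_bigr => k _.
  rewrite Phi_bigcat /Hf.
  rewrite -[in RHS]pull3; apply: eq_bigr => j _.
  rewrite Phi_bigcat -[in RHS]pull3; apply: eq_bigr => j' _.
  rewrite (Phi_tscale hpsi) /Phi sum_tmul sum_tmul /=.
  rewrite scaler_sumr; apply: eq_bigr => x _.
  rewrite scaler_sumr; apply: eq_bigr => y _.
  rewrite exchange_big /= scaler_sumr; apply: eq_bigr => z _.
  by [].
rewrite reorg; apply: eq_bigr => x0 _; apply: eq_bigr => x1 _; apply: eq_bigr => x2 _.
rewrite /eval3; apply: eq_bigr => k _.
rewrite [RHS]sum_pair; under [RHS]eq_bigr do under eq_bigr do rewrite sum_pair.
rewrite /Hf.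
apply: eq_trans (_ : _ = \sum_j \sum_j' \sum_i' \sum_i _) _.
  apply: eq_bigr => j _; apply: eq_bigr => j' _.
  rewrite scaler_sumr; apply: eq_bigr => i' _.
  rewrite scaler_sumr; apply: eq_bigr => i _.
  rewrite scalerA; reflexivity.
rewrite [RHS]exchange_big /=; apply: eq_bigr => j _.
rewrite reord3; apply: eq_bigr => i _; apply: eq_bigr => i' _; apply: eq_bigr => j' _.
by rewrite /rX /= mulrC.
Qed.
End PhiTeval.

Section FwdRel.
Variables (K : fieldType) (I J : finType) (tauV : I -> I -> K).
Variables (R : F3 K I -> Prop) (S : F3 K J -> Prop).
Variables (B A : lmodType K) (opB : I -> B -> B -> B) (opA : I * J -> A -> A -> A).
Hypothesis HA : forall d, black_rel R S d -> forall a, eval3 opA d a = 0.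
Hypothesis HB : forall d, perp R d -> forall b, eval3 opB d b = 0.
Variable perpperp : forall r, perp (perp R) r -> R r.

Lemma fwd_rel s : S s -> forall t, tnull (teval (tmul opB opA) s t).
Proof.
move=> Ss t psi hpsi.
change (Phi psi (teval (tmul opB opA) s t) = 0).
rewrite (Phi_teval opB opA hpsi).
rewrite big1_seq // => x0 _; rewrite big1_seq // => x1 _; rewrite big1_seq // => x2 _.
set X := fun m : 'I_3 => nth x0 [:: x0; x1; x2] m.
apply: HA; exists (rX opB psi X), s; split => //.
apply: perpperp => e He.
have E := HB He (fun m => (X m).1).
transitivity (psi (eval3 opB e (fun m => (X m).1))); last by rewrite E (psi0 hpsi).
rewrite /eval3 (psi_sum hpsi); apply: eq_bigr => k _.
rewrite (psi_sum hpsi); apply: eq_bigr => i _.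
rewrite (psi_sum hpsi); apply: eq_bigr => i' _.
by rewrite (psiZ hpsi).
Qed.
End FwdRel.


Section Bcons.
Variables (K : fieldType) (I : finType) (tauV : I -> I -> K).
Hypothesis hV : involutive_mx tauV.
Variable r : F3 K I.

Local Notation tau' := (dual_tau tauV).

Lemma kronL (p : I -> K) q1 :
  \sum_k (q1 == k)%:R * p k = p q1.
Proof.
rewrite (bigD1 q1) //= eqxx mul1r big1 ?addr0 // => k /negbTE nk.
by rewrite eq_sym nk mul0r.
Qed.

Lemma inv' m i : \sum_n tau' m n * tau' n i = (m == i)%:R.
Proof.
rewrite eq_sym -hV; apply: eq_bigr => n _; rewrite /dual_tau; ring.
Qed.

Lemma double_inv (p : I -> K) i :
  \sum_n tau' n i * \sum_m tau' m n * p m = p i.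
Proof.
transitivity (\sum_m (\sum_n tau' m n * tau' n i) * p m).
  under eq_bigr do rewrite mulr_sumr.
  rewrite exchange_big /=; apply: eq_bigr => m _.
  rewrite mulr_suml; apply: eq_bigr => n _; ring.
rewrite -[RHS]kronL; apply: eq_bigr => m _; by rewrite inv' eq_sym.
Qed.

Definition Idx := option ('I_3 + 'I_3 * I)%type.
Definition Bt := {ffun Idx -> K^o}.
Definition gI (a : 'I_3) : Idx := Some (inl a).
Definition EI (k : 'I_3) (i : I) : Idx := Some (inr (k, i)).

Definition opB (i : I) (x y : Bt) : Bt := [ffun w : Idx => match w return K^o with
  | None => \sum_(k < 3) \sum_(l : I)
        (x (EI k l) * y (gI k) * r k i l +
         x (gI k) * y (EI k l) * \sum_(m : I) tau' m i * r k m l)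
  | Some (inl _) => 0
  | Some (inr (k, m)) =>
      x (gI (c3 k 1)) * y (gI (c3 k 2)) * (m == i)%:R +
      x (gI (c3 k 2)) * y (gI (c3 k 1)) * tau' m i
  end].

Lemma scaleo (a : K) (x : K^o) : a *: x = a * x.
Proof. by []. Qed.

Lemma ffZ (a : K) (f : Bt) w : (a *: f) w = a * f w.
Proof. by rewrite ffunE. Qed.

Lemma opB_bilin : bilinear_op opB.
Proof.
move=> i; split => x a u v; apply/ffunP => w; rewrite !ffunE;
  case: w => [[b|[k m]]|] /=.
- by rewrite scaleo mulr0 addr0.
- rewrite !ffunE !scaleo; ring.
  rewrite scaleo mulr_sumr -big_split; apply: eq_bigr => k _.
  rewrite mulr_sumr -big_split; apply: eq_bigr => l _.
  rewrite !ffunE !scaleo /=; ring.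
- by rewrite scaleo mulr0 addr0.
- rewrite !ffunE !scaleo; ring.
- rewrite scaleo mulr_sumr -big_split; apply: eq_bigr => k _.
  rewrite mulr_sumr -big_split; apply: eq_bigr => l _.
  rewrite !ffunE !scaleo /=; ring.
Qed.

Lemma opB_equiv : equivariant tau' opB.
Proof.
move=> i x y; apply/ffunP => w; rewrite sum_ffunE !ffunE.
rewrite (eq_bigr (fun n => tau' n i * opB n x y w)); last by move=> n _; rewrite ffZ.
under eq_bigr => n _ do rewrite ffunE.
case: w => [[b|[k m]]|] /=.
- by rewrite big1 // => n _; rewrite mulr0.
- under eq_bigr do rewrite mulrDr.
  rewrite big_split /=.
  transitivity (tau' m i * (x (gI (c3 k 1)) * y (gI (c3 k 2))) +
                (m == i)%:R * (x (gI (c3 k 2)) * y (gI (c3 k 1)))).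
    ring.
  congr (_ + _).
    rewrite (bigD1 m) //= eqxx big1 ?addr0; first by rewrite mulr1.
    by move=> n; rewrite eq_sym => /negbTE ->; rewrite !mulr0.
  rewrite -inv' mulr_suml; apply: eq_bigr => n _; ring.
- under [RHS]eq_bigr do rewrite mulr_sumr.
  rewrite [RHS]exchange_big /=; apply: eq_bigr => k _.
  under [RHS]eq_bigr do rewrite mulr_sumr.
  rewrite [RHS]exchange_big /=; apply: eq_bigr => l _.
  under [RHS]eq_bigr do rewrite mulrDr.
  rewrite [RHS]big_split /= [RHS]addrC.
  congr (_ + _).
  - transitivity (x (gI k) * y (EI k l) * \sum_n tau' n i * \sum_m tau' m n * r k m l).
      by rewrite double_inv; ring.
    rewrite mulr_sumr; apply: eq_bigr => n _; ring.
  - rewrite mulr_sumr; apply: eq_bigr => n _; ring.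
Qed.

Lemma opB_g i x y a : opB i x y (gI a) = 0.
Proof. by rewrite ffunE. Qed.
Lemma opB_E i x y k m : opB i x y (EI k m) =
  x (gI (c3 k 1)) * y (gI (c3 k 2)) * (m == i)%:R +
  x (gI (c3 k 2)) * y (gI (c3 k 1)) * tau' m i.
Proof. by rewrite ffunE. Qed.
Lemma opB_N i x y : opB i x y None = \sum_(k < 3) \sum_(l : I)
        (x (EI k l) * y (gI k) * r k i l +
         x (gI k) * y (EI k l) * \sum_(m : I) tau' m i * r k m l).
Proof. by rewrite ffunE. Qed.


Lemma c3_inj_r (k : 'I_3) : injective (fun t : 'I_3 => c3 k t).
Proof.
move=> a b; case: (ord3_cases k) => ->; case: (ord3_cases a) => ->;
  case: (ord3_cases b) => -> //; move/(congr1 val); rewrite !c3_val; norm3.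
Qed.

Lemma c3_inj_l (k : 'I_3) : injective (fun t : 'I_3 => c3 t (2 * k)).
Proof.
move=> a b; case: (ord3_cases k) => ->; case: (ord3_cases a) => ->;
  case: (ord3_cases b) => -> //; move/(congr1 val); rewrite !c3_val; norm3.
Qed.

Lemma c3_inj_2 (t : 'I_3) : injective (fun a : 'I_3 => c3 t (2 * a)).
Proof.
move=> a b; case: (ord3_cases t) => ->; case: (ord3_cases a) => ->;
  case: (ord3_cases b) => -> //; move/(congr1 val); rewrite !c3_val; norm3.
Qed.

Lemma act_even (c : F3 K I) (t k : 'I_3) (i j : I) :
  act3 tauV (perm (@c3_inj_l t)) c k i j = c (c3 k t) i j.
Proof.
rewrite /act3.
have E : ((perm (@c3_inj_l t))^-1)%g k = c3 k t.
  apply: (perm_inj (s := perm (@c3_inj_l t))); rewrite permKV permE.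
  case: (ord3_cases k) => ->; case: (ord3_cases t) => ->; apply: val_inj; norm3.
rewrite E permE.
have -> : c3 (c3 (c3 k t) 1) (2 * t) == c3 k 1 = true.
  case: (ord3_cases k) => ->; case: (ord3_cases t) => ->; apply/eqP; apply: val_inj; norm3.
by [].
Qed.

Lemma act_odd (c : F3 K I) (t k : 'I_3) (i j : I) :
  act3 tauV (perm (@c3_inj_2 t)) c k i j = \sum_l tauV j l * c (c3 t (2 * k)) i l.
Proof.
rewrite /act3.
have E : ((perm (@c3_inj_2 t))^-1)%g k = c3 t (2 * k).
  apply: (perm_inj (s := perm (@c3_inj_2 t))); rewrite permKV permE.
  case: (ord3_cases k) => ->; case: (ord3_cases t) => ->; apply: val_inj; norm3.
rewrite E permE.
have -> : c3 t (2 * c3 (c3 t (2 * k)) 1) == c3 k 1 = false.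
  case: (ord3_cases k) => ->; case: (ord3_cases t) => ->; apply/negbTE/eqP => /(congr1 val); norm3.
by [].
Qed.

Lemma opB_rel (R : F3 K I -> Prop) :
  (forall s c, R c -> R (act3 tauV s c)) -> R r ->
  forall d, perp R d -> forall x, eval3 opB d x = 0.
Proof.
move=> Ract Rr d Hd x.
apply/ffunP => w; rewrite ffunE /eval3 !sum_ffunE.
case: w => [[b|[k0 m0]]|].
- apply: big1 => k _; rewrite sum_ffunE; apply: big1 => i _.
  rewrite sum_ffunE; apply: big1 => j _; by rewrite ffZ opB_g mulr0.
- apply: big1 => k _; rewrite sum_ffunE; apply: big1 => i _.
  rewrite sum_ffunE; apply: big1 => j _; rewrite ffZ opB_E !opB_g; ring.
pose xi (m a : 'I_3) := x m (gI a).
pose PE k k' := xi (c3 k 1) (c3 k' 1) * xi (c3 k 2) (c3 k' 2) * xi k k'.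
pose PO k k' := xi (c3 k 1) (c3 k' 2) * xi (c3 k 2) (c3 k' 1) * xi k k'.
pose AE k k' := \sum_i \sum_j d k i j * r k' i j.
pose AO k k' := \sum_i \sum_j \sum_l d k i j * tau' l j * r k' i l.
transitivity (\sum_k \sum_k' (PE k k' * AE k k' + PO k k' * AO k k')).
  apply: eq_bigr => k _.
  transitivity (\sum_i \sum_j \sum_k' (PE k k' * (d k i j * r k' i j) +
       PO k k' * \sum_l d k i j * tau' l j * r k' i l)).
    rewrite sum_ffunE; apply: eq_bigr => i _; rewrite sum_ffunE; apply: eq_bigr => j _.
    rewrite ffZ opB_N mulr_sumr; apply: eq_bigr => k' _.
    transitivity (\sum_l ((j == l)%:R * (PE k k' * (d k i j * r k' i l)) +
       PO k k' * (d k i j * tau' l j * r k' i l))).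
      rewrite mulr_sumr; apply: eq_bigr => l _; rewrite opB_E opB_g /PE /PO /xi eq_sym; ring.
    rewrite big_split /= kronL; congr (_ + _); by rewrite mulr_sumr.
  rewrite reord3; apply: eq_bigr => k' _; rewrite [LHS]exchange_big /= /AE /AO.
  rewrite !mulr_sumr -big_split; apply: eq_bigr => i _.
  rewrite /= !mulr_sumr -big_split; apply: eq_bigr => j _ => //.
under eq_bigr do rewrite big_split. rewrite big_split /=.
have Even : \sum_k \sum_k' PE k k' * AE k k' = 0.
  transitivity (\sum_k \sum_(t < 3) PE k (c3 k t) * AE k (c3 k t)).
    by apply: eq_bigr => k _; apply: (reindex_inj (@c3_inj_r k)).
  rewrite exchange_big /=; apply: big1 => t _.
  transitivity (PE (inord 0) (c3 (inord 0) t) * \sum_k AE k (c3 k t)).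
    rewrite mulr_sumr; apply: eq_bigr => k _; congr (_ * _).
    rewrite /PE /xi; case: (ord3_cases k) => ->; case: (ord3_cases t) => ->; norm3; ring.
  apply/eqP; rewrite mulf_eq0; apply/orP; right; apply/eqP.
  transitivity (\sum_(k < 3) \sum_i \sum_j
     act3 tauV (perm (@c3_inj_l t)) r k i j * d k i j); last exact: Hd (Ract _ _ Rr).
  apply: eq_bigr => k _; apply: eq_bigr => i _; apply: eq_bigr => j _.
  by rewrite act_even mulrC.
have Odd : \sum_k \sum_k' PO k k' * AO k k' = 0.
  transitivity (\sum_k \sum_(t < 3) PO k (c3 t (2 * k)) * AO k (c3 t (2 * k))).
    by apply: eq_bigr => k _; apply: (reindex_inj (@c3_inj_l k)).
  rewrite exchange_big /=; apply: big1 => t _.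
  transitivity (PO (inord 0) (c3 t 0) * \sum_k AO k (c3 t (2 * k))).
    rewrite mulr_sumr; apply: eq_bigr => k _; congr (_ * _).
    rewrite /PO /xi; case: (ord3_cases k) => ->; case: (ord3_cases t) => ->; norm3; ring.
  apply/eqP; rewrite mulf_eq0; apply/orP; right; apply/eqP.
  transitivity (- \sum_(k < 3) \sum_i \sum_j
     act3 tauV (perm (@c3_inj_2 t)) r k i j * d k i j); last by rewrite (Hd _ (Ract _ _ Rr)) oppr0.
  rewrite -sumrN; apply: eq_bigr => k _; rewrite -sumrN; apply: eq_bigr => i _.
  rewrite -sumrN; apply: eq_bigr => j _.
  rewrite act_odd mulr_suml -sumrN; apply: eq_bigr => l _.
  rewrite /dual_tau; ring.
by rewrite Even Odd addr0.
Qed.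


End Bcons.


Section Bwd.
Variables (K : fieldType) (I J : finType) (tauV : I -> I -> K) (tauW : J -> J -> K).
Hypothesis hV : involutive_mx tauV.
Variables (R : F3 K I -> Prop) (S : F3 K J -> Prop).
Hypothesis hR : is_relation_space tauV R.
Variables (A : lmodType K) (opA : I * J -> A -> A -> A).
Hypothesis H : forall (B : lmodType K) (opB : I -> B -> B -> B),
      is_algebra (dual_tau tauV) (perp R) opB ->
      is_tensor_Q_algebra tauW S opB opA.

Local Notation tau' := (dual_tau tauV).
Local Notation Bt := (Bt K I).

Definition dlt (u : Idx I) : Bt := [ffun w => (w == u)%:R].

Lemma dltE u w : dlt u w = (w == u)%:R.
Proof. by rewrite ffunE. Qed.

Lemma gI_eq (a b : 'I_3) : (gI I a == gI I b) = (a == b).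
Proof. by apply/eqP/eqP => [[]|->]. Qed.

Lemma EI_gI k l (a : 'I_3) : (EI k l == gI I a) = false.
Proof. by []. Qed.

Lemma c3_12 (k : 'I_3) : (c3 k 2 == c3 k 1) = false.
Proof.
by case: (ord3_cases k) => ->; apply/negbTE/eqP => /(congr1 val); norm3.
Qed.
Lemma c3_21 (k : 'I_3) : (c3 k 1 == c3 k 2) = false.
Proof. by rewrite eq_sym c3_12. Qed.

Section WithR.
Variable r : F3 K I.
Hypothesis Rr : R r.

Lemma B_alg : is_algebra (dual_tau tauV) (perp R) (opB tauV r).
Proof.
case: hR => _ _ Ract.
split; [exact: opB_bilin | exact: opB_equiv | exact: opB_rel].
Qed.

Lemma B4 k i i' :
  opB tauV r i (opB tauV r i' (dlt (gI I (c3 k 1))) (dlt (gI I (c3 k 2)))) (dlt (gI I k)) None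
  = r k i i'.
Proof.
rewrite opB_N (bigD1 k) //= [X in _ + X]big1 ?addr0; last first.
  move=> k' nk; apply: big1 => l _.
  rewrite opB_g !dltE EI_gI gI_eq (negbTE nk); rewrite /=; ring.
rewrite -[RHS](kronL (fun l => r k i l) i').
apply: eq_bigr => l _.
rewrite opB_E opB_g !dltE EI_gI !gI_eq !eqxx c3_12 c3_21 eq_sym; rewrite /=; ring.
Qed.

Lemma B5a i m :
  opB tauV r i (dlt (gI I (c3 (inord 0) 2))) (dlt (gI I (c3 (inord 0) 1))) (EI (inord 0) m)
  = tau' m i.
Proof. rewrite opB_E !dltE !gI_eq !eqxx c3_12 c3_21 /=; ring. Qed.

Lemma B5b i m :
  opB tauV r i (dlt (gI I (c3 (inord 0) 1))) (dlt (gI I (c3 (inord 0) 2))) (EI (inord 0) m)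
  = (m == i)%:R.
Proof. rewrite opB_E !dltE !gI_eq !eqxx c3_12 c3_21 /=; ring. Qed.
End WithR.

Lemma lin_eval (w : Idx I) : lin_form (fun b : Bt => b w).
Proof. by move=> a u v; rewrite !ffunE. Qed.

Lemma kronV (V : lmodType K) (f : I -> V) m :
  \sum_i (m == i)%:R *: f i = f m.
Proof.
rewrite (bigD1 m) //= eqxx scale1r big1 ?addr0 // => i /negbTE ni.
by rewrite eq_sym ni scale0r.
Qed.

Lemma bwd_equiv : equivariant (black_tau tauV tauW) opA.
Proof.
case: hR => R0 _ _.
move=> [i1 j] x y.
have key : forall m, \sum_i tau' m i *: opA (i, j) y x =
    \sum_l tauW l j *: opA (m, l) x y.
  move=> m.
  pose psi := fun b : Bt => b (EI (inord 0) m).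
  pose t1 := [:: (dlt (gI I (c3 (inord 0) 1)), x)].
  pose t2 := [:: (dlt (gI I (c3 (inord 0) 2)), y)].
  pose oB := opB tauV (fun _ _ _ => 0).
  have E0 := (H (B_alg R0)).1 j t1 t2 psi (lin_eval _).
  have E1 : Phi psi (tmul oB opA j t2 t1 ++ tscale (-1)
     (\big[cat/[::]]_(l : J) tscale (tauW l j) (tmul oB opA l t1 t2))) = 0 := E0.
  move: E1; rewrite Phi_cat (Phi_tscale (lin_eval _)) scaleN1r Phi_bigcat.
  move=> /eqP; rewrite subr_eq0 => /eqP.
  rewrite /Phi sum_tmul /t1 /t2 !big_seq1 /= => E.
  under eq_bigr => i _ do rewrite -(@B5a (fun _ _ _ => 0) i m).
  rewrite E.
  apply: eq_bigr => l _.
  rewrite /tscale big_map sum_tmul !big_seq1 /=.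
  under eq_bigr => i _ do rewrite ffZ (@B5b (fun _ _ _ => 0) i m) -scalerA.
  by rewrite -scaler_sumr kronV.
rewrite -(kronV (fun i => opA (i, j) y x) i1).
transitivity (\sum_m tau' i1 m *: \sum_l tauW l j *: opA (m, l) x y).
  under [RHS]eq_bigr => m _ do rewrite -key scaler_sumr.
  rewrite [RHS]exchange_big /=; apply: eq_bigr => i _.
  rewrite -(inv' hV) scaler_suml; apply: eq_bigr => m _; by rewrite scalerA.
rewrite sum_pair; apply: eq_bigr => m _; rewrite scaler_sumr; apply: eq_bigr => l _.
rewrite scalerA /black_tau /dual_tau /=; congr (_ *: _); ring.
Qed.

Lemma bwd_rel : forall d, black_rel R S d -> forall a, eval3 opA d a = 0.
Proof.
move=> d [r [s [Rr Ss Hd]]] a.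
pose t := fun m : 'I_3 => [:: (dlt (gI I m), a m)].
pose psi := fun b : Bt => b None.
have E0 := (H (B_alg Rr)).2 s Ss t psi (lin_eval None).
have E1 : Phi psi (teval (tmul (opB tauV r) opA) s t) = 0 := E0.
move: E1; rewrite (Phi_teval (opB tauV r) opA (lin_eval None)) /t !big_seq1.
set x0 := (dlt (gI I (inord 0)), a (inord 0)).
set x1 := (dlt (gI I (inord 1)), a (inord 1)).
set x2 := (dlt (gI I (inord 2)), a (inord 2)).
have HX : forall m : 'I_3, nth x0 [:: x0; x1; x2] m = (dlt (gI I m), a m).
  by move=> m; case: (ord3_cases m) => ->; rewrite inordK.
move=> E; apply: etrans E; rewrite /eval3; apply: eq_bigr => k _.
apply: eq_bigr => p _; apply: eq_bigr => q _.
by rewrite Hd /rX !HX /= B4.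
Qed.

End Bwd.


Unset Implicit Arguments. Set Strict Implicit. Set Printing Implicit Defensive.

Theorem mainTheorem3 (K : fieldType) (I J : finType)
  (tauV : I -> I -> K) (tauW : J -> J -> K)
  (R : F3 K I -> Prop) (S : F3 K J -> Prop)
  (hV : involutive_mx tauV) (hW : involutive_mx tauW)
  (hR : is_relation_space tauV R) (hS : is_relation_space tauW S)
  (A : lmodType K) (opA : I * J -> A -> A -> A) (hA : bilinear_op opA) :
  is_algebra (black_tau tauV tauW) (black_rel R S) opA <->
  (forall (B : lmodType K) (opB : I -> B -> B -> B),
      is_algebra (dual_tau tauV) (perp R) opB ->
      is_tensor_Q_algebra tauW S opB opA).
Proof.
split.
- case=> hbil hequiv hrel B opB [hBbil hBeq hBrel]; split.
  + move=> j t1 t2; exact: (fwd_equiv hV hBeq hequiv).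
  + move=> s Ss t; case: hR => R0 Rlin _.
    exact: (fwd_rel hrel hBrel (perpperp R0 Rlin) Ss t).
- move=> H; split; [exact: hA | exact: (bwd_equiv hV hR H) | exact: (bwd_rel hV hR H)].
Qed.
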